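(* Let $\nu$ be an eigenvalue of the nonlocal problem with $\nu\notin\{\lambda_n\}_{n\in\mathbb N_0}$. Then $\nu$ solves $$\frac1M=\sum_{n\in\mathbb N_0}\frac{\beta_n^2}{\lambda_n-\nu},\qquad \beta_n=\int_0^1C(y)\psi_n(y)\,dy.$$ Conversely, if $\nu\in\mathbb R$ solves this equation, then $\nu$ is an eigenvalue of the nonlocal problem.
   Context: $\mathbb{T}=[0,1]$ with endpoints identified; $D,\kappa>0$; $U\in W^{2,2}(\mathbb{T})$ is a nonconstant solution of $0=DU_{xx}-U+\kappa e^U/\int_0^1e^Udy$ (periodic). Set $A(x)=\kappa\frac{e^{U(x)}}{\int_0^1e^U}-1$, $M=\frac{\kappa}{(\int_0^1e^U)^2}>0$, $C(x)=e^{U(x)}$. Nonlocal eigenvalue problem: $D\varphi_{xx}+(A(x)-\nu)\varphi=MC(x)\int_0^1C(y)\varphi(y)dy$, $\varphi\not\equiv0$, periodic boundary conditions. Local problem: $D\psi_{xx}+(A(x)-\lambda)\psi=0$, periodic; its eigenpairs $(\lambda_n,\psi_n)_{n\in\mathbb N_0}$ are real with $\{\psi_n\}$ an orthonormal basis of $L^2(0,1)$ and $\lambda_0>\lambda_1\ge\lambda_2>\lambda_3\ge\lambda_4>\cdots$. *)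

(* Defs.v *)
From Stdlib Require Import Reals.
From Coquelicot Require Import Coquelicot.
Open Scope R_scope.

(* 1-periodic functions on R = functions on the torus T = [0,1]/~ *)
Definition periodic1 (f : R -> R) : Prop := forall x, f (x + 1) = f x.

(* twice differentiable everywhere (classical representative of a W^{2,2}
   solution) *)
Definition twice_diff (f : R -> R) : Prop :=
  forall x, ex_derive f x /\ ex_derive (Derive f) x.

Definition d2 (f : R -> R) (x : R) : R := Derive (Derive f) x.

Definition intExpU (U : R -> R) : R := RInt (fun y => exp (U y)) 0 1.

Definition Acoef (kappa : R) (U : R -> R) (x : R) : R :=
  kappa * exp (U x) / intExpU U - 1.

Definition Mcoef (kappa : R) (U : R -> R) : R := kappa / (intExpU U) ^ 2.

Definition Ccoef (U : R -> R) (x : R) : R := exp (U x).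

Definition steady_state (D kappa : R) (U : R -> R) : Prop :=
  periodic1 U /\ twice_diff U /\
  forall x, 0 = D * d2 U x - U x + kappa * exp (U x) / intExpU U.

Definition nonconstant (U : R -> R) : Prop := exists x y, U x <> U y.

Definition nonlocal_eigenvalue (D kappa : R) (U : R -> R) (nu : R) : Prop :=
  exists phi : R -> R,
    periodic1 phi /\ twice_diff phi /\ (exists x, phi x <> 0) /\
    forall x, D * d2 phi x + (Acoef kappa U x - nu) * phi x
              = Mcoef kappa U * Ccoef U x * RInt (fun y => Ccoef U y * phi y) 0 1.

Definition local_eigenpair (D kappa : R) (U : R -> R) (lam : R) (psi : R -> R)
  : Prop :=
  periodic1 psi /\ twice_diff psi /\
  forall x, D * d2 psi x + (Acoef kappa U x - lam) * psi x = 0.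

Definition L2ip (f g : R -> R) : R := RInt (fun y => f y * g y) 0 1.

(* (lam_n, psi_n)_n is the full family of eigenpairs of the local problem:
   each is an eigenpair, {psi_n} is an orthonormal basis of L^2(0,1)
   (completeness expressed by Parseval's identity on the dense class of
   Riemann square-integrable functions), and the eigenvalues are ordered
   lam_0 > lam_1 >= lam_2 > lam_3 >= lam_4 > ... *)
Definition local_spectral_data (D kappa : R) (U : R -> R)
  (lam : nat -> R) (psi : nat -> R -> R) : Prop :=
  (forall n, local_eigenpair D kappa U (lam n) (psi n)) /\
  (forall n m, L2ip (psi n) (psi m) = if Nat.eqb n m then 1 else 0) /\
  (forall f : R -> R, ex_RInt f 0 1 -> ex_RInt (fun y => f y ^ 2) 0 1 ->
     is_series (fun n => (L2ip f (psi n)) ^ 2) (RInt (fun y => f y ^ 2) 0 1)) /\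
  (forall k : nat, lam (2 * k)%nat > lam (2 * k + 1)%nat /\
                   lam (2 * k + 1)%nat >= lam (2 * k + 2)%nat).

Definition beta (U : R -> R) (psi : nat -> R -> R) (n : nat) : R :=
  L2ip (Ccoef U) (psi n).

(* Main.v *)
Require Import Defs.
From Stdlib Require Import Reals Lra Lia Factorial ZArith Classical ClassicalEpsilon.
From Coquelicot Require Import Coquelicot.
Require Import Defs.
Open Scope R_scope.

Lemma cont_pt (f : R -> R) x : continuous f x -> continuity_pt f x.
Proof. intro H. apply continuity_pt_filterlim. exact H. Qed.
Lemma pt_cont (f : R -> R) x : continuity_pt f x -> continuous f x.
Proof. intro H. apply continuity_pt_filterlim. exact H. Qed.

Lemma FTC (g : R -> R) c x : (forall t, continuous g t) ->
  is_derive (fun x => c + RInt g 0 x) x (g x).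
Proof.
  intro Hg.
  assert (H : is_derive (RInt g 0) x (g x)).
  { apply (is_derive_RInt g (RInt g 0) 0 x).
    apply filter_forall. intro y. apply (@RInt_correct R_CompleteNormedModule). apply (@ex_RInt_continuous R_CompleteNormedModule). intros; auto.
    auto. }
  pose proof (is_derive_plus (fun _ => c) (RInt g 0) x 0 (g x) (is_derive_const c x) H) as H2.
  replace (g x) with (plus 0 (g x)). exact H2. unfold plus, zero; simpl. ring.
Qed.

Lemma cplus (f g : R -> R) x : continuous f x -> continuous g x -> continuous (fun t => f t + g t) x.
Proof. intros. apply (continuous_plus f g); auto. Qed.
Lemma cmult (f g : R -> R) x : continuous f x -> continuous g x -> continuous (fun t => f t * g t) x.
Proof. intros. apply (continuous_mult f g); auto. Qed.
Lemma cminus (f g : R -> R) x : continuous f x -> continuous g x -> continuous (fun t => f t - g t) x.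
Proof. intros. apply (continuous_minus f g); auto. Qed.
Lemma cconst (c : R) x : continuous (fun _ : R => c) x.
Proof. apply continuous_const. Qed.

Fixpoint pic (q r : R -> R) (a b : R) (n : nat) : (R -> R) * (R -> R) :=
  match n with
  | O => (fun _ => a, fun _ => b)
  | S m => let p := pic q r a b m in
      (fun x => a + RInt (snd p) 0 x, fun x => b + RInt (fun t => q t * fst p t + r t) 0 x)
  end.
Definition PY q r a b n := fst (pic q r a b n).
Definition PZ q r a b n := snd (pic q r a b n).

Lemma PY_S q r a b n x : PY q r a b (S n) x = a + RInt (PZ q r a b n) 0 x.
Proof. reflexivity. Qed.
Lemma PZ_S q r a b n x : PZ q r a b (S n) x = b + RInt (fun t => q t * PY q r a b n t + r t) 0 x.
Proof. reflexivity. Qed.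

Lemma pic_cont (q r : R -> R) a b : (forall t, continuous q t) -> (forall t, continuous r t) ->
  forall n x, continuous (PY q r a b n) x /\ continuous (PZ q r a b n) x.
Proof.
  intros Hq Hr n. induction n as [|n IH]; intro x.
  - split; apply cconst.
  - split.
    + apply (@ex_derive_continuous R_AbsRing R_NormedModule). eexists. apply (FTC (PZ q r a b n) a x).
      intro t; apply IH.
    + apply (@ex_derive_continuous R_AbsRing R_NormedModule). eexists.
      apply (FTC (fun t => q t * PY q r a b n t + r t) b x).
      intro t. apply cplus; auto. apply cmult; auto. apply IH.
Qed.

Lemma pic_der (q r : R -> R) a b : (forall t, continuous q t) -> (forall t, continuous r t) ->
  forall n x, is_derive (PY q r a b (S n)) x (PZ q r a b n x) /\
              is_derive (PZ q r a b (S n)) x (q x * PY q r a b n x + r x).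
Proof.
  intros Hq Hr n x. split.
  - apply (FTC (PZ q r a b n) a x). intro t; apply pic_cont; auto.
  - apply (FTC (fun t => q t * PY q r a b n t + r t) b x).
    intro t. apply cplus; auto. apply cmult; auto. apply pic_cont; auto.
Qed.

Lemma pic_0 (q r : R -> R) a b n : PY q r a b n 0 = a /\ PZ q r a b n 0 = b.
Proof.
  destruct n; split; try reflexivity.
  rewrite PY_S, RInt_point. unfold zero; simpl; ring.
  rewrite PZ_S, RInt_point. unfold zero; simpl; ring.
Qed.

Lemma exRc (f : R -> R) a b : (forall t, continuous f t) -> ex_RInt f a b.
Proof. intro H. apply (@ex_RInt_continuous R_CompleteNormedModule). intros; auto. Qed.

Lemma int_bound_pos (f : R -> R) C k x : 0 <= x -> (forall t, continuous f t) ->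
  (forall t, 0 <= t <= x -> Rabs (f t) <= C * t ^ k) ->
  Rabs (RInt f 0 x) <= C * x ^ (S k) / INR (S k).
Proof.
  intros Hx Hf Hb.
  eapply Rle_trans. apply abs_RInt_le; auto. apply exRc; auto.
  assert (HI : is_RInt (fun t => C * t ^ k) 0 x (C * (x ^ S k / INR (S k) - 0 ^ S k / INR (S k)))).
  { apply (is_RInt_scal (fun t => t ^ k) 0 x C). apply is_RInt_pow. }
  replace (C * x ^ S k / INR (S k)) with (RInt (fun t => C * t ^ k) 0 x).
  apply RInt_le; auto. apply exRc. intro t. apply continuous_Rabs_comp. auto.
  eexists; exact HI. intros t Ht. apply Hb. lra.
  transitivity (C * (x ^ S k / INR (S k) - 0 ^ S k / INR (S k))). apply is_RInt_unique; exact HI. assert (INR (S k) <> 0) by (apply not_0_INR; lia). rewrite pow_i by lia. unfold Rdiv. rewrite Rmult_0_l. change (C * (x ^ S k * / INR (S k) - 0) = C * x ^ S k * / INR (S k) :> R). ring.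
Qed.

Lemma cneg (f : R -> R) : (forall t, continuous f t) -> forall t, continuous (fun y => f (- y)) t.
Proof.
  intros H t. apply pt_cont. apply (continuity_pt_comp (fun y => - y) f).
  apply (continuity_pt_opp id). apply continuity_pt_id. apply cont_pt; auto.
Qed.

Lemma int_bound (f : R -> R) C k x : (forall t, continuous f t) ->
  (forall t, Rabs t <= Rabs x -> Rabs (f t) <= C * Rabs t ^ k) ->
  Rabs (RInt f 0 x) <= C * Rabs x ^ (S k) / INR (S k).
Proof.
  intros Hf Hb. destruct (Rle_or_lt 0 x) as [Hx|Hx].
  - rewrite (Rabs_right x) by lra. apply int_bound_pos; auto.
    intros t Ht. replace (t ^ k) with (Rabs t ^ k) by (rewrite Rabs_right; lra). apply Hb. rewrite !Rabs_right; lra.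
  - set (g := fun y => f (- y)).
    assert (HI : is_RInt (fun y => opp (f (- y))) 0 (- x) (RInt f 0 x)).
    { apply (is_RInt_comp_opp f). replace (- 0) with 0 by ring. replace (- - x) with x by ring.
      apply (@RInt_correct R_CompleteNormedModule). apply exRc; auto. }
    assert (E : RInt f 0 x = - RInt g 0 (- x)).
    { rewrite <- (is_RInt_unique _ _ _ _ HI). rewrite (RInt_opp (fun y => f (- y))). reflexivity.
      apply exRc. intro t. apply cneg; auto. }
    rewrite E, Rabs_Ropp. rewrite (Rabs_left x) by lra.
    apply int_bound_pos. lra. intro t. apply cneg; auto.
    intros t Ht. unfold g. replace t with (Rabs (- t)) at 2. apply Hb.
    rewrite Rabs_Ropp, (Rabs_right t), (Rabs_left x); lra.
    rewrite Rabs_Ropp, Rabs_right; lra.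
Qed.

Definition DY q r a b n x := PY q r a b (S n) x - PY q r a b n x.
Definition DZ q r a b n x := PZ q r a b (S n) x - PZ q r a b n x.

Lemma DY_S (q r : R -> R) a b n x : (forall t, continuous q t) -> (forall t, continuous r t) ->
  DY q r a b (S n) x = RInt (DZ q r a b n) 0 x.
Proof.
  intros Hq Hr. unfold DY. rewrite !PY_S.
  transitivity (minus (RInt (PZ q r a b (S n)) 0 x) (RInt (PZ q r a b n) 0 x)).
  unfold minus, plus, opp; simpl. ring.
  rewrite <- RInt_minus. reflexivity.
  apply exRc; intro; apply pic_cont; auto. apply exRc; intro; apply pic_cont; auto.
Qed.

Lemma DZ_S (q r : R -> R) a b n x : (forall t, continuous q t) -> (forall t, continuous r t) ->
  DZ q r a b (S n) x = RInt (fun t => q t * DY q r a b n t) 0 x.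
Proof.
  intros Hq Hr. unfold DY, DZ. rewrite !PZ_S.
  transitivity (minus (RInt (fun t => q t * PY q r a b (S n) t + r t) 0 x) (RInt (fun t => q t * PY q r a b n t + r t) 0 x)).
  unfold minus, plus, opp; simpl. ring.
  rewrite <- RInt_minus. apply RInt_ext. intros. unfold minus, plus, opp; simpl. ring.
  apply exRc; intro; apply cplus; auto; apply cmult; auto; apply pic_cont; auto.
  apply exRc; intro; apply cplus; auto; apply cmult; auto; apply pic_cont; auto.
Qed.

Lemma DY_cont (q r : R -> R) a b n t : (forall t, continuous q t) -> (forall t, continuous r t) ->
  continuous (DY q r a b n) t /\ continuous (DZ q r a b n) t.
Proof. intros. split; apply cminus; apply pic_cont; auto. Qed.

Lemma step_ineq K L n X : 0 <= K -> 1 <= L -> 0 <= X ->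
  K * L ^ n / INR (fact n) * X ^ S n / INR (S n) <= K * L ^ S n * X ^ S n / INR (fact (S n)).
Proof.
  intros HK HL HX.
  assert (HF : 0 < INR (fact n)) by (apply lt_0_INR; apply lt_O_fact).
  assert (HN : 0 < INR (S n)) by (apply lt_0_INR; lia).
  rewrite fact_simpl, mult_INR.
  assert (HY : 0 <= X ^ S n) by (apply pow_le; auto).
  assert (HLn : 0 <= L ^ n) by (apply pow_le; lra).
  change (L ^ S n) with (L * L ^ n).
  set (N := INR (S n)) in *. set (F := INR (fact n)) in *. set (Y := X ^ S n) in *.
  set (P := L ^ n) in *. clearbody N F Y P.
  assert (HA : 0 <= K * P * Y / (N * F)).
  { apply Rmult_le_pos. apply Rmult_le_pos. apply Rmult_le_pos; auto. auto.
    left; apply Rinv_0_lt_compat; nra. }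
  replace (K * P / F * Y / N) with (K * P * Y / (N * F)) by (field; split; lra).
  replace (K * (L * P) * Y / (N * F)) with ((K * P * Y / (N * F)) * L) by (field; split; lra).
  set (A := K * P * Y / (N * F)) in *. clearbody A. nra.
Qed.


Lemma pic_bound (q r : R -> R) a b R0 L K : (forall t, continuous q t) -> (forall t, continuous r t) ->
  1 <= L -> (forall t, Rabs t <= R0 -> Rabs (q t) <= L) ->
  (forall t, Rabs t <= R0 -> Rabs (DY q r a b 0 t) <= K /\ Rabs (DZ q r a b 0 t) <= K) ->
  0 <= R0 ->
  forall n t, Rabs t <= R0 ->
    Rabs (DY q r a b n t) <= K * L ^ n * Rabs t ^ n / INR (fact n) /\
    Rabs (DZ q r a b n t) <= K * L ^ n * Rabs t ^ n / INR (fact n).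
Proof.
  intros Hq Hr HL HqL HK HR0.
  assert (K0 : 0 <= K). { assert (H0 : Rabs 0 <= R0) by (rewrite Rabs_R0; lra). destruct (HK 0 H0) as [H _]. eapply Rle_trans; [apply Rabs_pos| exact H]. }
  induction n as [|n IH]; intros t Ht.
  - simpl. rewrite !Rmult_1_r, Rdiv_1_r. apply HK; auto.
  - assert (HF : 0 < INR (fact n)) by (apply lt_0_INR; apply lt_O_fact).
    split.
    + rewrite DY_S by auto. eapply Rle_trans.
      apply (int_bound _ (K * L ^ n / INR (fact n)) n t).
      intro; apply DY_cont; auto.
      intros s Hs. assert (Hs' : Rabs s <= R0) by lra. destruct (IH s Hs') as [_ H2].
      replace (K * L ^ n / INR (fact n) * Rabs s ^ n) with (K * L ^ n * Rabs s ^ n / INR (fact n)) by (field; lra).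
      exact H2.
      exact (step_ineq K L n (Rabs t) K0 HL (Rabs_pos t)).
    + rewrite DZ_S by auto. eapply Rle_trans.
      apply (int_bound (fun t0 => q t0 * DY q r a b n t0) (K * L ^ S n / INR (fact n)) n t).
      intro s0; apply (cmult q (DY q r a b n) s0 (Hq s0) (proj1 (DY_cont q r a b n s0 Hq Hr))).
      intros s Hs. assert (Hs' : Rabs s <= R0) by lra. destruct (IH s Hs') as [H1 _].
      rewrite Rabs_mult.
      replace (K * L ^ S n / INR (fact n) * Rabs s ^ n) with (L * (K * L ^ n * Rabs s ^ n / INR (fact n))) by (change (L ^ S n) with (L * L ^ n); field; lra).
      apply Rmult_le_compat; [apply Rabs_pos|apply Rabs_pos|apply HqL; lra|exact H1].
      rewrite fact_simpl, mult_INR. right. assert (HN : INR (S n) <> 0) by (apply not_0_INR; lia).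
      set (N := INR (S n)) in *. set (F := INR (fact n)) in *. field. split; lra.
Qed.

Lemma DYc (q r : R -> R) a b n t : (forall t, continuous q t) -> (forall t, continuous r t) ->
  continuous (DY q r a b n) t.
Proof. intros Hq Hr. exact (proj1 (DY_cont q r a b n t Hq Hr)). Qed.
Lemma DZc (q r : R -> R) a b n t : (forall t, continuous q t) -> (forall t, continuous r t) ->
  continuous (DZ q r a b n) t.
Proof. intros Hq Hr. exact (proj2 (DY_cont q r a b n t Hq Hr)). Qed.

Lemma bound_on (f : R -> R) R0 : (forall t, continuous f t) -> 0 <= R0 ->
  exists M, forall t, Rabs t <= R0 -> Rabs (f t) <= M.
Proof.
  intros Hf HR.
  destruct (continuity_ab_maj (fun t => Rabs (f t)) (- R0) R0) as [m [Hm _]]. lra.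
  intros c _. apply cont_pt. apply continuous_Rabs_comp. auto.
  exists (Rabs (f m)). intros t Ht. apply Hm. apply Rabs_le_between in Ht. lra.
Qed.

Lemma exp_sum K c : Un_cv (fun N => sum_f_R0 (fun k => Rabs (K * c ^ k / INR (fact k))) N) (Rabs K * exp c) ->
  True.
Proof. auto. Qed.

Lemma exp_series (K c : R) : 0 <= K -> 0 <= c ->
  Un_cv (fun N => sum_f_R0 (fun k => Rabs (K * c ^ k / INR (fact k))) N) (K * exp c).
Proof.
  intros HK Hc.
  assert (H : is_series (fun k => Rabs (K * c ^ k / INR (fact k))) (K * exp c)).
  { pose proof (is_exp_Reals c) as H. unfold is_pseries in H.
    apply (is_series_scal K) in H.
    eapply is_series_ext; [| exact H].
    intro n. unfold scal; simpl. unfold mult; simpl. rewrite pow_n_pow.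
    rewrite Rabs_right. field. apply not_0_INR. apply fact_neq_0.
    apply Rle_ge. apply Rmult_le_pos. apply Rmult_le_pos; auto. apply pow_le; auto.
    left. apply Rinv_0_lt_compat. apply lt_0_INR. apply lt_O_fact. }
  apply is_series_Reals in H. exact H.
Qed.

Lemma pic_summable (q r : R -> R) a b R0 : (forall t, continuous q t) -> (forall t, continuous r t) ->
  0 <= R0 -> exists K L, 0 <= K /\ 1 <= L /\ forall n t, Rabs t <= R0 ->
    Rabs (DY q r a b n t) <= K * L ^ n * R0 ^ n / INR (fact n) /\
    Rabs (DZ q r a b n t) <= K * L ^ n * R0 ^ n / INR (fact n).
Proof.
  intros Hq Hr HR.
  destruct (bound_on q R0 Hq HR) as [Lq HLq].
  destruct (bound_on (fun t => Rabs (DY q r a b 0 t) + Rabs (DZ q r a b 0 t)) R0) as [K HK].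
  intro t. apply cplus; apply continuous_Rabs_comp. apply DYc; assumption. apply DZc; assumption. exact HR.
  assert (HK' : forall t, Rabs t <= R0 -> Rabs (DY q r a b 0 t) <= K /\ Rabs (DZ q r a b 0 t) <= K).
  { intros t Ht. specialize (HK t Ht). rewrite Rabs_right in HK.
    pose proof (Rabs_pos (DY q r a b 0 t)). pose proof (Rabs_pos (DZ q r a b 0 t)). lra.
    pose proof (Rabs_pos (DY q r a b 0 t)). pose proof (Rabs_pos (DZ q r a b 0 t)). lra. }
  set (L := Rmax 1 Lq).
  assert (HL1 : 1 <= L) by apply Rmax_l.
  assert (HqL : forall t, Rabs t <= R0 -> Rabs (q t) <= L).
  { intros t Ht. eapply Rle_trans. apply HLq; auto. apply Rmax_r. }
  assert (K0 : 0 <= K). { assert (H0 : Rabs 0 <= R0) by (rewrite Rabs_R0; lra).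
    destruct (HK' 0 H0) as [H _]. eapply Rle_trans; [apply Rabs_pos| exact H]. }
  exists K, L. split; auto. split; auto.
  intros n t Ht.
  destruct (pic_bound q r a b R0 L K Hq Hr HL1 HqL HK' HR n t Ht) as [H1 H2].
  assert (Hp : K * L ^ n * Rabs t ^ n / INR (fact n) <= K * L ^ n * R0 ^ n / INR (fact n)).
  { unfold Rdiv. apply Rmult_le_compat_r. left. apply Rinv_0_lt_compat. apply lt_0_INR. apply lt_O_fact.
    apply Rmult_le_compat_l. apply Rmult_le_pos; auto. apply pow_le; lra.
    apply pow_incr. split; auto. apply Rabs_pos. }
  split; lra.
Qed.

Lemma ex_DYZ (q r : R -> R) a b x : (forall t, continuous q t) -> (forall t, continuous r t) ->
  ex_series (fun n => DY q r a b n x) /\ ex_series (fun n => DZ q r a b n x).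
Proof.
  intros Hq Hr.
  destruct (pic_summable q r a b (Rabs x) Hq Hr (Rabs_pos x)) as [K [L [HK [HL Hb]]]].
  assert (Hs : ex_series (fun k => Rabs (K * (L * Rabs x) ^ k / INR (fact k)))).
  { eexists. apply is_series_Reals. apply exp_series; auto. apply Rmult_le_pos; [lra|apply Rabs_pos]. }
  split; apply (@ex_series_le R_AbsRing R_CompleteNormedModule _ _ ) with (2 := Hs); intro n; destruct (Hb n x (Rle_refl _)) as [H1 H2];
   (eapply Rle_trans; [| apply Rle_abs]); rewrite Rpow_mult_distr, <- Rmult_assoc; assumption.
Qed.

Lemma Un_cv_SP (q r : R -> R) a b x : (forall t, continuous q t) -> (forall t, continuous r t) ->
  Un_cv (fun N => SP (DY q r a b) N x) (Series (fun n => DY q r a b n x)) /\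
  Un_cv (fun N => SP (DZ q r a b) N x) (Series (fun n => DZ q r a b n x)).
Proof.
  intros Hq Hr. destruct (ex_DYZ q r a b x Hq Hr) as [H1 H2].
  split; apply is_series_Reals; apply Series_correct; assumption.
Qed.

Lemma CVN_DY (q r : R -> R) a b (rr : posreal) : (forall t, continuous q t) -> (forall t, continuous r t) ->
  CVN_r (DY q r a b) rr * CVN_r (DZ q r a b) rr.
Proof.
  intros Hq Hr.
  assert (E : exists KL : R * R, 0 <= fst KL /\ 1 <= snd KL /\ forall n t, Rabs t <= rr ->
    Rabs (DY q r a b n t) <= fst KL * snd KL ^ n * rr ^ n / INR (fact n) /\
    Rabs (DZ q r a b n t) <= fst KL * snd KL ^ n * rr ^ n / INR (fact n)).
  { destruct (pic_summable q r a b rr Hq Hr) as [K [L H]]. left; apply cond_pos.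
    exists (K, L). exact H. }
  destruct (constructive_indefinite_description _ E) as [[K L] [HK [HL Hb]]]. simpl in *.
  assert (Hc : Un_cv (fun N => sum_f_R0 (fun k => Rabs (K * (L * rr) ^ k / INR (fact k))) N) (K * exp (L * rr))).
  { apply exp_series; auto. apply Rmult_le_pos. lra. left; apply cond_pos. }
  split; exists (fun k => K * (L * rr) ^ k / INR (fact k)); exists (K * exp (L * rr)); split; auto;
   intros n y Hy; unfold Boule in Hy; rewrite Rminus_0_r in Hy;
   destruct (Hb n y (Rlt_le _ _ Hy)) as [H1 H2]; rewrite Rpow_mult_distr, <- Rmult_assoc;
   assumption.
Qed.

Definition cvY (q r : R -> R) a b (Hq : forall t, continuous q t) (Hr : forall t, continuous r t) :
  forall x, {l : R | Un_cv (fun N => SP (DY q r a b) N x) l} :=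
  fun x => exist _ (Series (fun n => DY q r a b n x)) (proj1 (Un_cv_SP q r a b x Hq Hr)).
Definition cvZ (q r : R -> R) a b (Hq : forall t, continuous q t) (Hr : forall t, continuous r t) :
  forall x, {l : R | Un_cv (fun N => SP (DZ q r a b) N x) l} :=
  fun x => exist _ (Series (fun n => DZ q r a b n x)) (proj2 (Un_cv_SP q r a b x Hq Hr)).

Definition Ysol q r a b x := a + Series (fun n => DY q r a b n x).
Definition Zsol q r a b x := b + Series (fun n => DZ q r a b n x).

Lemma PY_SP (q r : R -> R) a b n x :
  PY q r a b (S n) x = a + SP (DY q r a b) n x /\ PZ q r a b (S n) x = b + SP (DZ q r a b) n x.
Proof.
  induction n as [|n IH].
  - unfold SP, DY, DZ; simpl sum_f_R0. change (PY q r a b 0 x) with a. change (PZ q r a b 0 x) with b.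
    split; ring.
  - destruct IH as [H1 H2]. unfold SP in *.
    change (sum_f_R0 (fun k => DY q r a b k x) (S n)) with (sum_f_R0 (fun k => DY q r a b k x) n + DY q r a b (S n) x).
    change (sum_f_R0 (fun k => DZ q r a b k x) (S n)) with (sum_f_R0 (fun k => DZ q r a b k x) n + DZ q r a b (S n) x).
    assert (E1 : sum_f_R0 (fun k => DY q r a b k x) n = PY q r a b (S n) x - a) by lra.
    assert (E2 : sum_f_R0 (fun k => DZ q r a b k x) n = PZ q r a b (S n) x - b) by lra.
    rewrite E1, E2. unfold DY, DZ. split; ring.
Qed.

Lemma CVU_shift (F : nat -> R -> R) (G : R -> R) c0 (Sq : nat -> R -> R) (Lf : R -> R) x rr :
  CVU Sq Lf x rr -> (forall n y, F (S n) y = c0 + Sq n y) -> (forall y, G y = c0 + Lf y) -> CVU F G x rr.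
Proof.
  intros H HF HG eps He. destruct (H eps He) as [N HN]. exists (S N).
  intros n y Hn Hy. destruct n as [|m]. lia. rewrite HF, HG.
  replace (c0 + Lf y - (c0 + Sq m y)) with (Lf y - Sq m y) by ring. apply HN; auto. lia.
Qed.

Lemma CVU_affine (F : nat -> R -> R) (G h k : R -> R) x rr B :
  CVU F G x rr -> (forall y, Boule x rr y -> Rabs (h y) <= B) ->
  CVU (fun n y => h y * F n y + k y) (fun y => h y * G y + k y) x rr.
Proof.
  intros H Hb eps He.
  assert (HB : 0 < Rabs B + 1) by (pose proof (Rabs_pos B); lra).
  destruct (H (eps / (Rabs B + 1))) as [N HN]. apply Rdiv_lt_0_compat; lra.
  exists N. intros n y Hn Hy.
  replace (h y * G y + k y - (h y * F n y + k y)) with (h y * (G y - F n y)) by ring.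
  rewrite Rabs_mult. specialize (HN n y Hn Hy). specialize (Hb y Hy).
  pose proof (Rabs_pos (h y)). pose proof (Rabs_pos (G y - F n y)).
  assert (Hhb : Rabs (h y) <= Rabs B + 1) by (pose proof (Rle_abs B); lra).
  apply Rle_lt_trans with ((Rabs B + 1) * Rabs (G y - F n y)).
  apply Rmult_le_compat_r; auto.
  replace eps with ((Rabs B + 1) * (eps / (Rabs B + 1))) by (field; lra).
  apply Rmult_lt_compat_l; auto.
Qed.

Lemma CVU_direct (F : nat -> R -> R) (G : R -> R) c0 (Sq : nat -> R -> R) (Lf : R -> R) x rr :
  CVU Sq Lf x rr -> (forall n y, F n y = c0 + Sq n y) -> (forall y, G y = c0 + Lf y) -> CVU F G x rr.
Proof.
  intros H HF HG eps He. destruct (H eps He) as [N HN]. exists N.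
  intros n y Hn Hy. rewrite HF, HG.
  replace (c0 + Lf y - (c0 + Sq n y)) with (Lf y - Sq n y) by ring. apply HN; auto.
Qed.

Lemma Series_zero (f : nat -> R) : (forall n, f n = 0) -> Series f = 0.
Proof.
  intro H. rewrite (Series_ext f (fun n => 0 * 1)). rewrite Series_scal_l. ring.
  intro n. rewrite H. ring.
Qed.

Lemma ode_exists (q r : R -> R) a b : (forall t, continuous q t) -> (forall t, continuous r t) ->
  exists y z : R -> R, y 0 = a /\ z 0 = b /\ (forall x, is_derive y x (z x)) /\
    (forall x, is_derive z x (q x * y x + r x)).
Proof.
  intros Hq Hr. exists (Ysol q r a b), (Zsol q r a b).
  split; [|split; [|split]].
  - unfold Ysol. rewrite Series_zero. ring. intro n. unfold DY.
    destruct (pic_0 q r a b (S n)) as [H1 _]. destruct (pic_0 q r a b n) as [H2 _]. rewrite H1, H2. ring.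
  - unfold Zsol. rewrite Series_zero. ring. intro n. unfold DZ.
    destruct (pic_0 q r a b (S n)) as [_ H1]. destruct (pic_0 q r a b n) as [_ H2]. rewrite H1, H2. ring.
  - intro x0.
    assert (Hp : 0 < Rabs x0 + 1) by (pose proof (Rabs_pos x0); lra).
    set (rr := mkposreal _ Hp).
    assert (Hx0 : Boule 0 rr x0). { unfold Boule; simpl. rewrite Rminus_0_r. lra. }
    destruct (CVN_DY q r a b rr Hq Hr) as [cY cZ].
    pose proof (CVN_CVU _ (cvY q r a b Hq Hr) rr cY) as HY.
    pose proof (CVN_CVU _ (cvZ q r a b Hq Hr) rr cZ) as HZ.
    assert (HZ' : CVU (PZ q r a b) (Zsol q r a b) 0 rr).
    { apply (CVU_shift _ _ b _ _ _ _ HZ). intros n y; apply (proj2 (PY_SP q r a b n y)). intro; reflexivity. }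
    assert (HY1 : CVU (fun n => PY q r a b (S n)) (Ysol q r a b) 0 rr).
    { apply (CVU_direct _ _ a _ _ _ _ HY). intros n y; apply (proj1 (PY_SP q r a b n y)). intro; reflexivity. }
    apply is_derive_Reals.
    apply (CVU_derivable (fun n => PY q r a b (S n)) (PZ q r a b) (Ysol q r a b) (Zsol q r a b) 0 rr HZ').
    intros x Hx. apply (CVU_cv _ _ _ _ HY1 x Hx).
    intros n x Hx. apply is_derive_Reals. exact (proj1 (pic_der q r a b Hq Hr n x)).
    exact Hx0.
  - intro x0.
    assert (Hp : 0 < Rabs x0 + 1) by (pose proof (Rabs_pos x0); lra).
    set (rr := mkposreal _ Hp).
    assert (Hx0 : Boule 0 rr x0). { unfold Boule; simpl. rewrite Rminus_0_r. lra. }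
    destruct (CVN_DY q r a b rr Hq Hr) as [cY cZ].
    pose proof (CVN_CVU _ (cvY q r a b Hq Hr) rr cY) as HY.
    pose proof (CVN_CVU _ (cvZ q r a b Hq Hr) rr cZ) as HZ.
    assert (HY' : CVU (PY q r a b) (Ysol q r a b) 0 rr).
    { apply (CVU_shift _ _ a _ _ _ _ HY). intros n y; apply (proj1 (PY_SP q r a b n y)). intro; reflexivity. }
    assert (HZ1 : CVU (fun n => PZ q r a b (S n)) (Zsol q r a b) 0 rr).
    { apply (CVU_direct _ _ b _ _ _ _ HZ). intros n y; apply (proj2 (PY_SP q r a b n y)). intro; reflexivity. }
    destruct (bound_on q rr Hq) as [B HB]. left; apply cond_pos.
    assert (HA : CVU (fun n y => q y * PY q r a b n y + r y) (fun y => q y * Ysol q r a b y + r y) 0 rr).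
    { apply (CVU_affine _ _ _ _ _ _ B HY'). intros y Hy. apply HB. unfold Boule in Hy.
      rewrite Rminus_0_r in Hy. left; exact Hy. }
    apply is_derive_Reals.
    apply (CVU_derivable (fun n => PZ q r a b (S n)) (fun n y => q y * PY q r a b n y + r y)
      (Zsol q r a b) (fun y => q y * Ysol q r a b y + r y) 0 rr HA).
    intros x Hx. apply (CVU_cv _ _ _ _ HZ1 x Hx).
    intros n x Hx. apply is_derive_Reals. exact (proj2 (pic_der q r a b Hq Hr n x)).
    exact Hx0.
Qed.

Lemma der_mult (f g : R -> R) x df dg : is_derive f x df -> is_derive g x dg ->
  is_derive (fun t => f t * g t) x (df * g x + f x * dg).
Proof. intros Hf Hg. exact (is_derive_mult f g x df dg Hf Hg Rmult_comm). Qed.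
Lemma der_plus (f g : R -> R) x df dg : is_derive f x df -> is_derive g x dg ->
  is_derive (fun t => f t + g t) x (df + dg).
Proof. intros Hf Hg. exact (is_derive_plus f g x df dg Hf Hg). Qed.
Lemma der_explin s x : is_derive (fun t => exp (s * t)) x (s * exp (s * x)).
Proof. auto_derive; auto. ring. Qed.

Lemma energy_ineq u v w B : Rabs w <= B -> Rabs (2 * u * v * (1 + w)) <= (1 + B) * (u * u + v * v).
Proof.
  intro H. rewrite Rabs_mult.
  assert (H1 : Rabs (2 * u * v) <= u * u + v * v).
  { rewrite !Rabs_mult, Rabs_right by lra.
    pose proof (Rabs_pos u); pose proof (Rabs_pos v).
    assert (u * u = Rabs u * Rabs u) by (rewrite <- Rabs_mult; rewrite Rabs_right; [ring| nra]).
    assert (v * v = Rabs v * Rabs v) by (rewrite <- Rabs_mult; rewrite Rabs_right; [ring| nra]).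
    rewrite H2, H3. pose proof (pow2_ge_0 (Rabs u - Rabs v)). nra. }
  assert (H2 : Rabs (1 + w) <= 1 + B).
  { eapply Rle_trans. apply Rabs_triang. rewrite Rabs_R1. lra. }
  rewrite Rmult_comm. apply Rmult_le_compat; auto using Rabs_pos.
Qed.

Lemma ode_unique (q y z : R -> R) : (forall t, continuous q t) ->
  (forall x, is_derive y x (z x)) -> (forall x, is_derive z x (q x * y x)) ->
  y 0 = 0 -> z 0 = 0 -> forall x, y x = 0 /\ z x = 0.
Proof.
  intros Hq Hy Hz Y0 Z0 X.
  destruct (bound_on q (Rabs X) Hq (Rabs_pos X)) as [B HB].
  set (K := 1 + B).
  set (E := fun t => y t * y t + z t * z t).
  assert (HE : forall t, is_derive E t (2 * y t * z t * (1 + q t))).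
  { intro t. unfold E. evar (d : R). replace (2 * y t * z t * (1 + q t)) with d.
    apply der_plus; apply der_mult; auto. unfold d. ring. }
  assert (HEb : forall t, Rabs t <= Rabs X -> Rabs (2 * y t * z t * (1 + q t)) <= K * E t).
  { intros t Ht. apply energy_ineq. auto. }
  assert (HG : forall s t, is_derive (fun t => E t * exp (s * t)) t
                 ((2 * y t * z t * (1 + q t) + s * E t) * exp (s * t))).
  { intros s t. evar (d : R). replace ((2 * y t * z t * (1 + q t) + s * E t) * exp (s * t)) with d.
    apply der_mult. apply HE. apply der_explin. unfold d. ring. }
  assert (Ec : forall s t, continuity_pt (fun t => E t * exp (s * t)) t).
  { intros s t. apply cont_pt. apply (@ex_derive_continuous R_AbsRing R_NormedModule). eexists. apply HG. }
  assert (E0 : E 0 = 0) by (unfold E; rewrite Y0, Z0; ring).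
  assert (Epos : forall t, 0 <= E t) by (intro t; unfold E; nra).
  assert (EX : E X = 0).
  { destruct (Rle_or_lt 0 X) as [HX|HX].
    - destruct (MVT_gen (fun t => E t * exp (- K * t)) 0 X _ (fun t _ => HG (- K) t) (fun t _ => Ec (- K) t))
        as [c [Hc Heq]].
      rewrite Rmin_left in Hc by lra. rewrite Rmax_right in Hc by lra.
      assert (Hcb : Rabs c <= Rabs X) by (rewrite !Rabs_right; lra).
      specialize (HEb c Hcb). apply Rabs_le_between in HEb.
      pose proof (exp_pos (- K * c)). pose proof (exp_pos (- K * X)).
      rewrite E0, Rmult_0_l in Heq.
      assert (Hd : (2 * y c * z c * (1 + q c) + - K * E c) * exp (- K * c) <= 0).
      { apply Rmult_le_0_r; lra. }
      assert (E X * exp (- K * X) <= 0) by nra.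
      pose proof (Epos X). nra.
    - destruct (MVT_gen (fun t => E t * exp (K * t)) X 0 _ (fun t _ => HG K t) (fun t _ => Ec K t))
        as [c [Hc Heq]].
      rewrite Rmin_left in Hc by lra. rewrite Rmax_right in Hc by lra.
      assert (Hcb : Rabs c <= Rabs X) by (rewrite !Rabs_left1; lra).
      specialize (HEb c Hcb). apply Rabs_le_between in HEb.
      pose proof (exp_pos (K * c)). pose proof (exp_pos (K * X)).
      rewrite E0, Rmult_0_l in Heq.
      assert (Hd : 0 <= (2 * y c * z c * (1 + q c) + K * E c) * exp (K * c)).
      { apply Rmult_le_pos; lra. }
      assert (E X * exp (K * X) <= 0) by nra.
      pose proof (Epos X). nra. }
  unfold E in EX. split; nra.
Qed.

Lemma td_der f : twice_diff f -> forall x, is_derive f x (Derive f x) /\ is_derive (Derive f) x (d2 f x).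
Proof. intros H x. destruct (H x) as [H1 H2]. split; apply Derive_correct; auto. Qed.

Lemma td_cont f : twice_diff f -> forall x, continuous f x /\ continuous (Derive f) x.
Proof.
  intros H x. destruct (H x) as [H1 H2]. split; apply (@ex_derive_continuous R_AbsRing R_NormedModule); auto.
Qed.

Lemma per_nat f : periodic1 f -> forall n x, f (x + INR n) = f x.
Proof.
  intros H n. induction n as [|n IH]; intro x. simpl. rewrite Rplus_0_r. reflexivity.
  rewrite S_INR. replace (x + (INR n + 1)) with ((x + INR n) + 1) by ring. rewrite H. apply IH.
Qed.

Lemma per_Z f : periodic1 f -> forall z x, f (x + IZR z) = f x.
Proof.
  intros H z x. destruct (Z_le_gt_dec 0 z) as [Hz|Hz].
  - rewrite <- (Z2Nat.id z) by lia. rewrite <- INR_IZR_INZ. apply per_nat; auto.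
  - replace z with (- Z.of_nat (Z.to_nat (- z)))%Z by lia. rewrite opp_IZR, <- INR_IZR_INZ.
    rewrite <- (per_nat f H (Z.to_nat (-z)) (x + - INR (Z.to_nat (- z)))). f_equal. ring.
Qed.

Lemma per_frac f : periodic1 f -> forall x, exists x0, 0 <= x0 <= 1 /\ f x = f x0.
Proof.
  intros H x. destruct (base_Int_part x) as [H1 H2].
  exists (x - IZR (Int_part x)). split. lra.
  replace x with ((x - IZR (Int_part x)) + IZR (Int_part x)) at 1 by ring. apply per_Z; auto.
Qed.

Lemma per_Derive f : periodic1 f -> (forall x, ex_derive f x) -> periodic1 (Derive f).
Proof.
  intros H Hd x.
  assert (H1 : is_derive (fun t => f (t + 1)) x (Derive f (x + 1))).
  { pose proof (is_derive_comp f (fun t => t + 1) x (Derive f (x + 1)) 1) as Hc.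
    assert (Hd1 : is_derive (fun t : R => t + 1) x 1) by (auto_derive; auto; ring).
    specialize (Hc (Derive_correct _ _ (Hd (x + 1))) Hd1).
    unfold scal in Hc; simpl in Hc; unfold mult in Hc; simpl in Hc. rewrite Rmult_1_l in Hc. exact Hc. }
  assert (H2 : is_derive f x (Derive f (x + 1))).
  { apply (is_derive_ext (fun t => f (t + 1))). intro t. apply H. exact H1. }
  symmetry. apply is_derive_unique. exact H2.
Qed.

Lemma IBP f g : periodic1 f -> periodic1 g -> twice_diff f -> twice_diff g ->
  (forall x, continuous (d2 f) x) -> (forall x, continuous (d2 g) x) ->
  RInt (fun x => d2 f x * g x - f x * d2 g x) 0 1 = 0.
Proof.
  intros Pf Pg Tf Tg Cf Cg.
  set (H := fun x => Derive f x * g x - f x * Derive g x).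
  assert (HD : forall x, is_derive H x (d2 f x * g x - f x * d2 g x)).
  { intro x. destruct (td_der f Tf x) as [F1 F2]. destruct (td_der g Tg x) as [G1 G2].
    pose proof (der_mult _ _ x _ _ F2 G1) as K1. pose proof (der_mult _ _ x _ _ F1 G2) as K2.
    pose proof (is_derive_minus _ _ x _ _ K1 K2) as K3.
    evar (l : R). replace (d2 f x * g x - f x * d2 g x) with l. exact K3.
    unfold l, minus, plus, opp; simpl. ring. }
  assert (HI := is_RInt_derive H (fun x => d2 f x * g x - f x * d2 g x) 0 1 (fun x _ => HD x)).
  assert (HC : forall x : R, Rmin 0 1 <= x <= Rmax 0 1 ->
     continuous (fun x0 : R => d2 f x0 * g x0 - f x0 * d2 g x0) x).
  { intros x _. apply cminus; apply cmult; auto. apply (proj1 (td_cont _ Tg x)). apply (proj1 (td_cont _ Tf x)). }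
  rewrite (is_RInt_unique _ _ _ _ (HI HC)).
  unfold H, minus, plus, opp; simpl.
    assert (E1 := Pf 0). assert (E2 := Pg 0).
    assert (E3 := per_Derive f Pf (fun x => proj1 (Tf x)) 0).
    assert (E4 := per_Derive g Pg (fun x => proj1 (Tg x)) 0).
    rewrite Rplus_0_l in E1, E2, E3, E4. rewrite E1, E2, E3, E4. ring.
Qed.

Lemma int_sq_pos (h : R -> R) x0 : (forall t, continuous h t) -> 0 <= x0 <= 1 -> h x0 <> 0 ->
  0 < RInt (fun y => h y ^ 2) 0 1.
Proof.
  intros Hh Hx0 Hne.
  pose proof (cont_pt h x0 (Hh x0)) as Hc.
  unfold continuity_pt, continue_in, limit1_in, limit_in in Hc.
  destruct (Hc (Rabs (h x0)) (Rabs_pos_lt _ Hne)) as [alp [Halp Hal]].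
  assert (Hp : forall x, Rabs (x - x0) < alp -> 0 < h x ^ 2).
  { intros x Hx. assert (h x <> 0).
    { destruct (Req_dec x x0) as [->|Hn]. auto.
      intro H0. assert (Hd : D_x no_cond x0 x /\ R_dist x x0 < alp).
      { split. split. constructor. auto. exact Hx. }
      specialize (Hal x Hd). simpl in Hal. unfold R_dist in Hal. rewrite H0 in Hal.
      rewrite Rminus_0_l, Rabs_Ropp in Hal. lra. }
    simpl. rewrite Rmult_1_r. nra. }
  assert (Hcs : forall t, continuous (fun y => h y ^ 2) t).
  { intro t. apply (continuous_ext (fun y => h y * h y)). intro; simpl; ring. apply cmult; auto. }
  set (c := Rmax 0 (x0 - alp / 2)). set (d := Rmin 1 (x0 + alp / 2)).
  assert (Hc0 : 0 <= c) by apply Rmax_l. assert (Hd1 : d <= 1) by apply Rmin_l.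
  assert (Hcx : c <= x0) by (unfold c; apply Rmax_lub; lra).
  assert (Hdx : x0 <= d) by (unfold d; apply Rmin_glb; lra).
  assert (Hcd : c < d).
  { unfold c, d. unfold Rmax, Rmin. destruct (Rle_dec 0 (x0 - alp/2)); destruct (Rle_dec 1 (x0 + alp/2)); lra. }
  assert (Hcl : x0 - alp / 2 <= c) by apply Rmax_r.
  assert (Hdl : d <= x0 + alp / 2) by apply Rmin_r.
  rewrite <- (RInt_Chasles (fun y => h y ^ 2) 0 c 1) by (apply exRc; auto).
  rewrite <- (RInt_Chasles (fun y => h y ^ 2) c d 1) by (apply exRc; auto).
  assert (0 <= RInt (fun y => h y ^ 2) 0 c).
  { apply RInt_ge_0; auto. apply exRc; auto. intros; apply pow2_ge_0. }
  assert (0 <= RInt (fun y => h y ^ 2) d 1).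
  { apply RInt_ge_0; auto. apply exRc; auto. intros; apply pow2_ge_0. }
  assert (0 < RInt (fun y => h y ^ 2) c d).
  { apply RInt_gt_0; auto. intros x Hx. apply Hp. apply Rabs_def1; lra. }
  unfold plus in *; simpl in *. lra.
Qed.

Lemma int_sq_zero (h : R -> R) : (forall t, continuous h t) -> periodic1 h ->
  RInt (fun y => h y ^ 2) 0 1 = 0 -> forall x, h x = 0.
Proof.
  intros Hc Hp H0 x. destruct (per_frac h Hp x) as [x0 [Hx0 E]]. rewrite E.
  destruct (Req_dec (h x0) 0) as [|Hn]; auto.
  pose proof (int_sq_pos h x0 Hc Hx0 Hn). lra.
Qed.

Lemma L2ip_plus f g p : (forall t, continuous f t) -> (forall t, continuous g t) -> (forall t, continuous p t) ->
  L2ip (fun y => f y + g y) p = L2ip f p + L2ip g p.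
Proof.
  intros Hf Hg Hp. unfold L2ip.
  transitivity (plus (RInt (fun y => f y * p y) 0 1) (RInt (fun y => g y * p y) 0 1)); [|reflexivity].
  rewrite <- RInt_plus. apply RInt_ext. intros; unfold plus; simpl; ring.
  apply exRc; intro; apply cmult; auto. apply exRc; intro; apply cmult; auto.
Qed.

Lemma L2ip_minus f g p : (forall t, continuous f t) -> (forall t, continuous g t) -> (forall t, continuous p t) ->
  L2ip (fun y => f y - g y) p = L2ip f p - L2ip g p.
Proof.
  intros Hf Hg Hp. unfold L2ip.
  transitivity (minus (RInt (fun y => f y * p y) 0 1) (RInt (fun y => g y * p y) 0 1)).
  rewrite <- RInt_minus. apply RInt_ext. intros; unfold minus, plus, opp; simpl; ring.
  apply exRc; intro; apply cmult; auto. apply exRc; intro; apply cmult; auto.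
  unfold minus, plus, opp; simpl; ring.
Qed.

Lemma parseval_polar (psi : nat -> R -> R) f g :
  (forall n t, continuous (psi n) t) -> (forall t, continuous f t) -> (forall t, continuous g t) ->
  (forall f : R -> R, ex_RInt f 0 1 -> ex_RInt (fun y => f y ^ 2) 0 1 ->
     is_series (fun n => (L2ip f (psi n)) ^ 2) (RInt (fun y => f y ^ 2) 0 1)) ->
  is_series (fun n => L2ip f (psi n) * L2ip g (psi n)) (L2ip f g).
Proof.
  intros Hp Hf Hg HP.
  assert (Cs : forall u : R -> R, (forall t, continuous u t) -> forall t, continuous (fun y => u y ^ 2) t).
  { intros u Hu t. apply (continuous_ext (fun y => u y * u y)). intro; simpl; ring. apply cmult; auto. }
  assert (Cp : forall t, continuous (fun y => f y + g y) t) by (intro; apply cplus; auto).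
  assert (Cm : forall t, continuous (fun y => f y - g y) t) by (intro; apply cminus; auto).
  pose proof (HP _ (exRc _ 0 1 Cp) (exRc _ 0 1 (Cs _ Cp))) as P1.
  pose proof (HP _ (exRc _ 0 1 Cm) (exRc _ 0 1 (Cs _ Cm))) as P2.
  pose proof (is_series_minus _ _ _ _ P1 P2) as P3.
  apply (is_series_scal (/ 4)) in P3.
  eapply is_series_ext; [| replace (L2ip f g) with (scal (/ 4) (minus (RInt (fun y => (f y + g y) ^ 2) 0 1)
        (RInt (fun y => (f y - g y) ^ 2) 0 1))); [exact P3|]].
  - intro n. simpl. rewrite L2ip_plus, L2ip_minus; auto. unfold scal, minus, plus, opp; simpl.
    unfold mult; simpl. field.
  - rewrite <- RInt_minus. unfold L2ip.
    rewrite <- RInt_scal. apply RInt_ext. intros. unfold scal, minus, plus, opp; simpl.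
    unfold mult; simpl. field.
    apply exRc. intro. apply (continuous_minus (fun y => (f y + g y) ^ 2) (fun y => (f y - g y) ^ 2)); auto.
    apply exRc; auto. apply exRc; auto.
Qed.

Ltac toR := match goal with |- ?a = ?b => change (@eq R a b) end.

Lemma U_cont D kappa U : steady_state D kappa U -> forall x, continuous U x.
Proof. intros [_ [T _]] x. apply (proj1 (td_cont U T x)). Qed.

Lemma C_cont D kappa U : steady_state D kappa U -> forall x, continuous (Ccoef U) x.
Proof.
  intros S x. unfold Ccoef. apply (continuous_comp U exp). apply (U_cont D kappa U S).
  apply pt_cont. apply derivable_continuous_pt. apply derivable_pt_exp.
Qed.

Lemma intExp_pos D kappa U : steady_state D kappa U -> 0 < intExpU U.
Proof.
  intro S. unfold intExpU. apply RInt_gt_0. lra. intros; apply exp_pos.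
  intros. apply (C_cont D kappa U S).
Qed.

Lemma A_cont D kappa U : steady_state D kappa U -> forall x, continuous (Acoef kappa U) x.
Proof.
  intros S x. unfold Acoef.
  apply (continuous_ext (fun t => (kappa / intExpU U) * Ccoef U t - 1)).
  intro t. unfold Ccoef. toR. field. pose proof (intExp_pos D kappa U S); lra.
  apply cminus. apply cmult. apply cconst. apply (C_cont D kappa U S). apply cconst.
Qed.

Lemma A_per D kappa U : steady_state D kappa U -> periodic1 (Acoef kappa U).
Proof. intros [P _] x. unfold Acoef. rewrite P. reflexivity. Qed.
Lemma C_per D kappa U : steady_state D kappa U -> periodic1 (Ccoef U).
Proof. intros [P _] x. unfold Ccoef. rewrite P. reflexivity. Qed.

Lemma M_pos D kappa U : 0 < kappa -> steady_state D kappa U -> 0 < Mcoef kappa U.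
Proof.
  intros Hk S. unfold Mcoef. pose proof (intExp_pos D kappa U S).
  apply Rdiv_lt_0_compat; auto. apply pow_lt; auto.
Qed.

Lemma d2_cont D kappa U nu phi F : 0 < D -> steady_state D kappa U -> twice_diff phi ->
  (forall x, continuous F x) ->
  (forall x, D * d2 phi x + (Acoef kappa U x - nu) * phi x = F x) -> forall x, continuous (d2 phi) x.
Proof.
  intros HD S T HF E x.
  apply (continuous_ext (fun t => / D * (F t - (Acoef kappa U t - nu) * phi t))).
  intro t. rewrite <- E. toR. field. lra.
  apply cmult. apply cconst. apply cminus; auto. apply cmult. apply cminus. apply (A_cont D kappa U S). apply cconst.
  apply (proj1 (td_cont phi T x)).
Qed.

Lemma proj_lemma D kappa U nu lam psi phi F : 0 < D -> steady_state D kappa U ->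
  periodic1 phi -> twice_diff phi -> (forall x, continuous F x) ->
  (forall x, D * d2 phi x + (Acoef kappa U x - nu) * phi x = F x) ->
  local_eigenpair D kappa U lam psi ->
  L2ip F psi = (lam - nu) * L2ip phi psi.
Proof.
  intros HD S Pphi Tphi HF Ephi [Ppsi [Tpsi Epsi]].
  assert (Epsi' : forall x, D * d2 psi x + (Acoef kappa U x - lam) * psi x = (fun _ => 0) x) by exact Epsi.
  pose proof (d2_cont D kappa U nu phi F HD S Tphi HF Ephi) as C1.
  pose proof (d2_cont D kappa U lam psi (fun _ => 0) HD S Tpsi (fun x => cconst 0 x) Epsi') as C2.
  pose proof (IBP phi psi Pphi Ppsi Tphi Tpsi C1 C2) as Hibp.
  assert (Cphi : forall x, continuous phi x) by (intro x; apply (proj1 (td_cont phi Tphi x))).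
  assert (Cpsi : forall x, continuous psi x) by (intro x; apply (proj1 (td_cont psi Tpsi x))).
  assert (X1 : ex_RInt (fun x => F x * psi x) 0 1) by (apply exRc; intro; apply cmult; auto).
  assert (X2 : ex_RInt (fun x => (lam - nu) * (phi x * psi x)) 0 1)
    by (apply exRc; intro; apply cmult; [apply cconst| apply cmult; auto]).
  assert (X3 : ex_RInt (fun x => d2 phi x * psi x - phi x * d2 psi x) 0 1)
    by (apply exRc; intro; apply cminus; apply cmult; auto).
  assert (X4 : ex_RInt (fun x => phi x * psi x) 0 1) by (apply exRc; intro; apply cmult; auto).
  pose proof (RInt_minus _ _ 0 1 X1 X2) as M.
  pose proof (RInt_scal _ 0 1 D X3) as Sc.
  pose proof (RInt_scal _ 0 1 (lam - nu) X4) as Sc2.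
  rewrite Hibp in Sc.
  assert (Z : RInt (fun x => F x * psi x) 0 1 - RInt (fun x => (lam - nu) * (phi x * psi x)) 0 1 = 0).
  { etransitivity. symmetry. apply M.
    etransitivity. apply (RInt_ext _ (fun x => scal D (d2 phi x * psi x - phi x * d2 psi x))).
    intros x _. unfold minus, plus, opp, scal; simpl. unfold mult; simpl.
    rewrite <- (Ephi x). specialize (Epsi x).
    replace (D * (d2 phi x * psi x - phi x * d2 psi x)) with (D * d2 phi x * psi x - phi x * (D * d2 psi x)) by ring.
    replace (D * d2 psi x) with (- (Acoef kappa U x - lam) * psi x) by lra. ring.
    etransitivity. apply Sc. unfold scal; simpl; unfold mult; simpl. ring. }
  assert (Z2 : RInt (fun x => (lam - nu) * (phi x * psi x)) 0 1 = (lam - nu) * RInt (fun x => phi x * psi x) 0 1).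
  { etransitivity; [| apply Sc2]. reflexivity. }
  unfold L2ip. lra.
Qed.

Lemma psi_cont D kappa U lam psi : local_spectral_data D kappa U lam psi ->
  forall n t, continuous (psi n) t.
Proof. intros [Hl _] n t. destruct (Hl n) as [_ [T _]]. apply (proj1 (td_cont _ T t)). Qed.

Lemma L2ip_scal_l c f p : (forall t, continuous f t) -> (forall t, continuous p t) ->
  L2ip (fun y => c * f y) p = c * L2ip f p.
Proof.
  intros Hf Hp. unfold L2ip.
  assert (X : ex_RInt (fun y => f y * p y) 0 1) by (apply exRc; intro; apply cmult; auto).
  pose proof (RInt_scal _ 0 1 c X) as Sc.
  etransitivity; [| apply Sc]. apply RInt_ext. intros; unfold scal; simpl; unfold mult; simpl; ring.
Qed.

Lemma sq_series_zero (a : nat -> R) l : is_series (fun n => a n ^ 2) l -> (forall n, a n = 0) -> l = 0.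
Proof.
  intros H Z. rewrite <- (is_series_unique _ _ H). apply Series_zero. intro n. rewrite Z. ring.
Qed.

Lemma forward D kappa U lam psi nu : 0 < D -> 0 < kappa -> steady_state D kappa U ->
  local_spectral_data D kappa U lam psi -> (forall n, nu <> lam n) ->
  nonlocal_eigenvalue D kappa U nu ->
  is_series (fun n => (beta U psi n) ^ 2 / (lam n - nu)) (1 / Mcoef kappa U).
Proof.
  intros HD Hk S SD Hnu [phi [Pphi [Tphi [[x0 Hx0] Ephi]]]].
  pose proof (psi_cont _ _ _ _ _ SD) as Cpsi.
  pose proof (M_pos D kappa U Hk S) as HM.
  set (M := Mcoef kappa U) in *.
  set (I := RInt (fun y => Ccoef U y * phi y) 0 1) in *.
  assert (Cphi : forall x, continuous phi x) by (intro x; apply (proj1 (td_cont phi Tphi x))).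
  assert (CC := C_cont D kappa U S).
  assert (HF : forall x, continuous (fun x => M * Ccoef U x * I) x).
  { intro x. apply cmult; [apply cmult; [apply cconst| auto]| apply cconst]. }
  assert (Hproj : forall n, M * I * beta U psi n = (lam n - nu) * L2ip phi (psi n)).
  { intro n. destruct SD as [Hl _].
    rewrite <- (proj_lemma D kappa U nu (lam n) (psi n) phi (fun x => M * Ccoef U x * I) HD S Pphi Tphi HF Ephi (Hl n)).
    unfold beta. rewrite <- L2ip_scal_l; auto. unfold L2ip. apply RInt_ext. intros; toR; ring. }
  destruct SD as [Hl [Hon [Hpar Hord]]].
  destruct (Req_dec I 0) as [HI0|HI0].
  - exfalso.
    assert (Z : forall n, L2ip phi (psi n) = 0).
    { intro n. specialize (Hproj n). rewrite HI0 in Hproj.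
      assert (lam n - nu <> 0) by (intro; apply (Hnu n); lra).
      apply (Rmult_eq_reg_l (lam n - nu)); auto. lra. }
    assert (Cs : forall t, continuous (fun y => phi y ^ 2) t).
    { intro t. apply (continuous_ext (fun y => phi y * phi y)). intro; simpl; ring. apply cmult; auto. }
    pose proof (Hpar phi (exRc _ 0 1 Cphi) (exRc _ 0 1 Cs)) as P.
    pose proof (sq_series_zero _ _ P Z) as P0.
    apply Hx0. apply (int_sq_zero phi Cphi Pphi P0).
  - pose proof (parseval_polar psi (Ccoef U) phi Cpsi CC Cphi Hpar) as P.
    apply (is_series_scal (/ (M * I))) in P.
    eapply is_series_ext; [| replace (1 / M) with (scal (/ (M * I)) (L2ip (Ccoef U) phi)); [exact P|]].
    + intro n. unfold scal; simpl; unfold mult; simpl.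
      assert (Hn : lam n - nu <> 0) by (intro; apply (Hnu n); lra).
      fold (beta U psi n).
      replace (L2ip phi (psi n)) with (M * I * beta U psi n / (lam n - nu)).
      field. split; auto. split; lra. rewrite Hproj. field. auto.
    + unfold scal; simpl; unfold mult; simpl. unfold L2ip. fold I. toR. field. split; lra.
Qed.

Lemma der_shift (y z : R -> R) : (forall x, is_derive y x (z x)) -> forall t, is_derive (fun t => y (t + 1)) t (z (t + 1)).
Proof.
  intros Hy t.
  pose proof (is_derive_comp y (fun t => t + 1) t (z (t + 1)) 1 (Hy (t + 1))) as Hc.
  assert (Hd1 : is_derive (fun t : R => t + 1) t 1) by (auto_derive; auto; ring).
  specialize (Hc Hd1). unfold scal in Hc; simpl in Hc; unfold mult in Hc; simpl in Hc.
  rewrite Rmult_1_l in Hc. exact Hc.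
Qed.

Lemma lin_comb (q r1 r2 y z y' z' : R -> R) c :
  (forall x, is_derive y x (z x)) -> (forall x, is_derive z x (q x * y x + r1 x)) ->
  (forall x, is_derive y' x (z' x)) -> (forall x, is_derive z' x (q x * y' x + r2 x)) ->
  (forall x, is_derive (fun t => c * y t + y' t) x (c * z x + z' x)) /\
  (forall x, is_derive (fun t => c * z t + z' t) x (q x * (c * y x + y' x) + (c * r1 x + r2 x))).
Proof.
  intros H1 H2 H3 H4. split; intro x.
  - apply der_plus; auto. evar (l : R). replace (c * z x) with l. apply der_mult. apply is_derive_const. auto.
    unfold l, zero; simpl. toR. ring.
  - evar (l : R). replace (q x * (c * y x + y' x) + (c * r1 x + r2 x)) with l.
    apply der_plus; auto. apply der_mult. apply is_derive_const. auto.
    unfold l, zero; simpl. toR. ring.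
Qed.

Lemma periodic_sol (q r y z : R -> R) : (forall t, continuous q t) -> periodic1 q -> periodic1 r ->
  (forall x, is_derive y x (z x)) -> (forall x, is_derive z x (q x * y x + r x)) ->
  y 1 = y 0 -> z 1 = z 0 ->
  periodic1 y /\ twice_diff y /\ (forall x, Derive y x = z x) /\ (forall x, d2 y x = q x * y x + r x).
Proof.
  intros Cq Pq Pr Hy Hz Y1 Z1.
  assert (Hw : forall t, is_derive (fun t => y (t + 1) - y t) t (z (t + 1) - z t)).
  { intro t. apply (is_derive_minus (fun t => y (t + 1)) y). apply der_shift; auto. auto. }
  assert (Hv : forall t, is_derive (fun t => z (t + 1) - z t) t (q t * (y (t + 1) - y t))).
  { intro t. pose proof (der_shift z (fun x => q x * y x + r x) Hz t) as K1.
    pose proof (is_derive_minus _ _ t _ _ K1 (Hz t)) as K2.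
    evar (l : R). replace (q t * (y (t + 1) - y t)) with l. exact K2.
    unfold l, minus, plus, opp; simpl. rewrite Pq, Pr. ring. }
  assert (U := ode_unique q (fun t => y (t + 1) - y t) (fun t => z (t + 1) - z t) Cq Hw Hv).
  assert (P : periodic1 y).
  { intro x. destruct (U ltac:(cbv beta; rewrite Rplus_0_l; lra) ltac:(cbv beta; rewrite Rplus_0_l; lra) x). lra. }
  assert (DE : forall x, Derive y x = z x) by (intro x; apply is_derive_unique; auto).
  assert (T : twice_diff y).
  { intro x. split. eexists; apply Hy. apply (ex_derive_ext z). intro; rewrite DE; auto. eexists; apply Hz. }
  split; auto. split; auto. split; auto.
  intro x. unfold d2. rewrite (Derive_ext (Derive y) z x DE). apply is_derive_unique; auto.
Qed.

Lemma L2ip_zero p : L2ip (fun _ => 0) p = 0.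
Proof.
  unfold L2ip. rewrite (RInt_ext _ (fun _ => 0)). rewrite RInt_const. unfold scal; simpl; unfold mult; simpl. ring.
  intros; toR; ring.
Qed.

Lemma no_periodic_hom D kappa U lam psi nu h : 0 < D -> steady_state D kappa U ->
  local_spectral_data D kappa U lam psi -> (forall n, nu <> lam n) ->
  periodic1 h -> twice_diff h -> (forall x, D * d2 h x + (Acoef kappa U x - nu) * h x = 0) ->
  forall x, h x = 0.
Proof.
  intros HD S SD Hnu Ph Th Eh.
  assert (Ch : forall x, continuous h x) by (intro x; apply (proj1 (td_cont h Th x))).
  destruct SD as [Hl [Hon [Hpar Hord]]].
  assert (Z : forall n, L2ip h (psi n) = 0).
  { intro n. pose proof (proj_lemma D kappa U nu (lam n) (psi n) h (fun _ => 0) HD S Ph Th (fun x => cconst 0 x) Eh (Hl n)) as P.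
    rewrite L2ip_zero in P. assert (lam n - nu <> 0) by (intro; apply (Hnu n); lra).
    apply (Rmult_eq_reg_l (lam n - nu)); auto. lra. }
  assert (Cs : forall t, continuous (fun y => h y ^ 2) t).
  { intro t. apply (continuous_ext (fun y => h y * h y)). intro; simpl; ring. apply cmult; auto. }
  pose proof (Hpar h (exRc _ 0 1 Ch) (exRc _ 0 1 Cs)) as P.
  pose proof (sq_series_zero _ _ P Z) as P0.
  apply (int_sq_zero h Ch Ph P0).
Qed.

Lemma lin3 (q r1 r2 r3 y1 z1 y2 z2 y3 z3 : R -> R) k1 k2 k3 :
  (forall x, is_derive y1 x (z1 x)) -> (forall x, is_derive z1 x (q x * y1 x + r1 x)) ->
  (forall x, is_derive y2 x (z2 x)) -> (forall x, is_derive z2 x (q x * y2 x + r2 x)) ->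
  (forall x, is_derive y3 x (z3 x)) -> (forall x, is_derive z3 x (q x * y3 x + r3 x)) ->
  (forall x, is_derive (fun t => k1 * y1 t + k2 * y2 t + k3 * y3 t) x (k1 * z1 x + k2 * z2 x + k3 * z3 x)) /\
  (forall x, is_derive (fun t => k1 * z1 t + k2 * z2 t + k3 * z3 t) x
     (q x * (k1 * y1 x + k2 * y2 x + k3 * y3 x) + (k1 * r1 x + k2 * r2 x + k3 * r3 x))).
Proof.
  intros H1 H2 H3 H4 H5 H6.
  assert (Hc : forall (f : R -> R) df k x, is_derive f x df -> is_derive (fun t => k * f t) x (k * df)).
  { intros f df k x Hf. evar (l : R). replace (k * df) with l. apply der_mult. apply is_derive_const. exact Hf.
    unfold l, zero; simpl. toR. ring. }
  split; intro x.
  - apply der_plus. apply der_plus. apply Hc; auto. apply Hc; auto. apply Hc; auto.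
  - evar (l : R). replace (q x * (k1 * y1 x + k2 * y2 x + k3 * y3 x) + (k1 * r1 x + k2 * r2 x + k3 * r3 x)) with l.
    apply der_plus. apply der_plus. apply Hc; apply H2. apply Hc; apply H4. apply Hc; apply H6.
    unfold l. toR. ring.
Qed.

Lemma converse D kappa U lam psi nu : 0 < D -> 0 < kappa -> steady_state D kappa U ->
  local_spectral_data D kappa U lam psi -> (forall n, nu <> lam n) ->
  is_series (fun n => (beta U psi n) ^ 2 / (lam n - nu)) (1 / Mcoef kappa U) ->
  nonlocal_eigenvalue D kappa U nu.
Proof.
  intros HD Hk S SD Hnu Hser.
  pose proof (psi_cont _ _ _ _ _ SD) as Cpsi.
  pose proof (M_pos D kappa U Hk S) as HM.
  set (M := Mcoef kappa U) in *.
  assert (CC := C_cont D kappa U S). assert (CA := A_cont D kappa U S).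
  set (q := fun x => (- / D) * (Acoef kappa U x - nu)).
  set (r := fun x => (M / D) * Ccoef U x).
  set (r0 := fun _ : R => 0).
  assert (Cq : forall t, continuous q t) by (intro t; apply cmult; [apply cconst| apply cminus; [apply CA|apply cconst]]).
  assert (Cr : forall t, continuous r t) by (intro t; apply cmult; [apply cconst| apply CC]).
  assert (Cr0 : forall t, continuous r0 t) by (intro t; apply cconst).
  assert (Pq : periodic1 q) by (intro x; unfold q; rewrite (A_per D kappa U S); reflexivity).
  assert (Pr : periodic1 r) by (intro x; unfold r; rewrite (C_per D kappa U S); reflexivity).
  destruct (ode_exists q r0 1 0 Cq Cr0) as [y1 [z1 [Y10 [Z10 [Dy1 Dz1]]]]].
  destruct (ode_exists q r0 0 1 Cq Cr0) as [y2 [z2 [Y20 [Z20 [Dy2 Dz2]]]]].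
  destruct (ode_exists q r 0 0 Cq Cr) as [yp [zp [Yp0 [Zp0 [Dyp Dzp]]]]].
  set (a11 := y1 1 - 1). set (a12 := y2 1). set (a21 := z1 1). set (a22 := z2 1 - 1).
  set (det := a11 * a22 - a12 * a21).
  assert (Gen : forall k1 k2 k3, k1 * a11 + k2 * a12 + k3 * yp 1 = 0 -> k1 * a21 + k2 * a22 + k3 * zp 1 = 0 ->
    let Y := fun t => k1 * y1 t + k2 * y2 t + k3 * yp t in
    periodic1 Y /\ twice_diff Y /\ Derive Y 0 = k2 /\ Y 0 = k1 /\
    forall x, D * d2 Y x + (Acoef kappa U x - nu) * Y x = k3 * M * Ccoef U x).
  { intros k1 k2 k3 E1 E2 Y.
    destruct (lin3 q r0 r0 r y1 z1 y2 z2 yp zp k1 k2 k3 Dy1 Dz1 Dy2 Dz2 Dyp Dzp) as [L1 L2].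
    assert (Prt : periodic1 (fun x => k1 * r0 x + k2 * r0 x + k3 * r x)).
    { intro x. cbv beta. rewrite Pr. reflexivity. }
    destruct (periodic_sol q (fun x => k1 * r0 x + k2 * r0 x + k3 * r x) Y
       (fun t => k1 * z1 t + k2 * z2 t + k3 * zp t) Cq Pq Prt L1 L2) as [PY [TY [DY2 D2Y]]].
    - unfold Y. rewrite Y10, Y20, Yp0. unfold a11, a12 in E1. lra.
    - rewrite Z10, Z20, Zp0. unfold a21, a22 in E2. lra.
    - split; auto. split; auto. split. rewrite DY2, Z10, Z20, Zp0. ring.
      split. unfold Y. rewrite Y10, Y20, Yp0. ring.
      intro x. rewrite D2Y. unfold q, r, r0. field. lra. }
  destruct (Req_dec det 0) as [Hdet|Hdet].
  - exfalso.
    assert (Ek : exists k1 k2, (k1 <> 0 \/ k2 <> 0) /\ k1 * a11 + k2 * a12 = 0 /\ k1 * a21 + k2 * a22 = 0).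
    { destruct (classic (a11 = 0 /\ a12 = 0)) as [[H1 H2]|H1].
      - destruct (classic (a21 = 0 /\ a22 = 0)) as [[H3 H4]|H3].
        + exists 1, 0. split. left; lra. rewrite H1, H2, H3, H4. split; ring.
        + exists a22, (- a21). split. apply not_and_or in H3. destruct H3; [right|left]; lra.
          unfold det in Hdet. split; lra.
      - exists a12, (- a11). split. apply not_and_or in H1. destruct H1; [right|left]; lra.
        unfold det in Hdet. split; lra. }
    destruct Ek as [k1 [k2 [Hnz [E1 E2]]]].
    destruct (Gen k1 k2 0 ltac:(lra) ltac:(lra)) as [PY [TY [DY0 [Y0 EY]]]].
    set (Y := fun t => k1 * y1 t + k2 * y2 t + 0 * yp t) in *.
    assert (Z : forall x, Y x = 0).
    { apply (no_periodic_hom D kappa U lam psi nu Y HD S SD Hnu PY TY). intro x. rewrite EY. ring. }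
    assert (K1 : k1 = 0) by (rewrite <- Y0; apply Z).
    assert (K2 : k2 = 0).
    { rewrite <- DY0. rewrite (Derive_ext Y (fun _ => 0) 0 Z). apply Derive_const. }
    destruct Hnz; auto.
  - set (c1 := (- yp 1 * a22 + zp 1 * a12) / det). set (c2 := (- zp 1 * a11 + yp 1 * a21) / det).
    assert (E1 : c1 * a11 + c2 * a12 + 1 * yp 1 = 0) by (unfold c1, c2, det in *; field; auto).
    assert (E2 : c1 * a21 + c2 * a22 + 1 * zp 1 = 0) by (unfold c1, c2, det in *; field; auto).
    destruct (Gen c1 c2 1 E1 E2) as [PY [TY [_ [_ EY]]]].
    set (Y := fun t => c1 * y1 t + c2 * y2 t + 1 * yp t) in *.
    assert (CY : forall x, continuous Y x) by (intro x; apply (proj1 (td_cont Y TY x))).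
    assert (CF : forall x, continuous (fun x => M * Ccoef U x) x) by (intro x; apply cmult; [apply cconst|apply CC]).
    assert (EY' : forall x, D * d2 Y x + (Acoef kappa U x - nu) * Y x = M * Ccoef U x)
      by (intro x; rewrite EY; ring).
    destruct SD as [Hl [Hon [Hpar Hord]]].
    assert (Hproj : forall n, M * beta U psi n = (lam n - nu) * L2ip Y (psi n)).
    { intro n. rewrite <- (proj_lemma D kappa U nu (lam n) (psi n) Y (fun x => M * Ccoef U x) HD S PY TY CF EY' (Hl n)).
      unfold beta. rewrite <- L2ip_scal_l; auto. }
    pose proof (parseval_polar psi (Ccoef U) Y Cpsi CC CY Hpar) as P.
    apply (is_series_scal M) in Hser.
    assert (P2 : is_series (fun n => beta U psi n * L2ip Y (psi n)) 1).
    { eapply is_series_ext; [| replace 1 with (scal M (1 / M)); [exact Hser|]].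
      + intro n. unfold scal; simpl; unfold mult; simpl.
        assert (Hn : lam n - nu <> 0) by (intro; apply (Hnu n); lra).
        replace (L2ip Y (psi n)) with (M * beta U psi n / (lam n - nu)).
        toR. field. auto. rewrite Hproj. toR. field. auto.
      + unfold scal; simpl; unfold mult; simpl. toR. field. lra. }
    assert (I1 : L2ip (Ccoef U) Y = 1).
    { rewrite <- (is_series_unique _ _ P). apply (is_series_unique _ _ P2). }
    exists Y. split; auto. split; auto. split.
    + apply NNPP. intro Hn.
      assert (Z : forall x, Y x = 0).
      { intro x. apply NNPP. intro Hx. apply Hn. exists x. exact Hx. }
      assert (L2ip (Ccoef U) Y = 0).
      { unfold L2ip. rewrite (RInt_ext _ (fun _ => 0)). rewrite RInt_const. unfold scal; simpl; unfold mult; simpl. toR. ring.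
        intros x _. rewrite Z. toR. ring. }
      lra.
    + intro x. unfold L2ip in I1. rewrite I1. rewrite Rmult_1_r. apply EY'.
Qed.


Theorem mainTheorem8 :
  forall (D kappa : R) (U : R -> R) (lam : nat -> R) (psi : nat -> R -> R),
    0 < D -> 0 < kappa ->
    steady_state D kappa U -> nonconstant U ->
    local_spectral_data D kappa U lam psi ->
    forall nu : R, (forall n, nu <> lam n) ->
      (nonlocal_eigenvalue D kappa U nu <->
       is_series (fun n => (beta U psi n) ^ 2 / (lam n - nu))
                 (1 / Mcoef kappa U)).
Proof.
  intros D kappa U lam psi HD Hk S _ SD nu Hnu. split.
  - intro H. exact (forward D kappa U lam psi nu HD Hk S SD Hnu H).
  - intro H. exact (converse D kappa U lam psi nu HD Hk S SD Hnu H).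
Qed.
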